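(* Let $X$ be a proper metric space and $Y$ a geodesic metric space. Let $F\colon X\to Y$ be an $L$-Lipschitz quotient mapping, and suppose $F$ is injective on $B(x,r)$ for some $x\in X$, $r>0$. Then $F$ is $L$-bilipschitz on $B(x,r/(1+2L^2))$, i.e. $L^{-1}d(p,q)\le d(F(p),F(q))\le L\,d(p,q)$ for all $p,q\in B(x,r/(1+2L^2))$.
   Context: A metric space is proper if closed balls are compact, and geodesic if any two points are joined by a curve whose length equals their distance. $F$ is an $L$-Lipschitz quotient ($L$-LQ) mapping, $L\ge1$, if $B(F(x),r/L)\subseteq F(B(x,r))\subseteq B(F(x),Lr)$ for all $x\in X$, $r>0$ ($B$ = open balls). *)

(* Defs.v *)
From Stdlib Require Import Reals Lra List.
Open Scope R_scope.

Record MetricSpace := {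
  mpt :> Type;
  mdist : mpt -> mpt -> R;
  mdist_nonneg : forall x y, 0 <= mdist x y;
  mdist_eq0 : forall x y, mdist x y = 0 <-> x = y;
  mdist_sym : forall x y, mdist x y = mdist y x;
  mdist_tri : forall x y z, mdist x z <= mdist x y + mdist y z
}.

Arguments mdist {m} _ _.

Definition ball {X : MetricSpace} (x : X) (r : R) : X -> Prop :=
  fun y => mdist x y < r.

Definition cball {X : MetricSpace} (x : X) (r : R) : X -> Prop :=
  fun y => mdist x y <= r.

Definition is_open {X : MetricSpace} (U : X -> Prop) : Prop :=
  forall x, U x -> exists e, 0 < e /\ forall y, ball x e y -> U y.

Definition compact {X : MetricSpace} (K : X -> Prop) : Prop :=
  forall (I : Type) (U : I -> X -> Prop),
    (forall i, is_open (U i)) ->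
    (forall x, K x -> exists i, U i x) ->
    exists l : list I, forall x, K x -> exists i, In i l /\ U i x.

Definition proper (X : MetricSpace) : Prop :=
  forall (x : X) (r : R), compact (cball x r).

Definition continuous_on_interval {Y : MetricSpace} (a b : R) (g : R -> Y) : Prop :=
  forall t, a <= t <= b -> forall e, 0 < e -> exists d, 0 < d /\
    forall s, a <= s <= b -> Rabs (s - t) < d -> mdist (g t) (g s) < e.

Fixpoint poly_length {Y : MetricSpace} (g : R -> Y) (t0 : R) (ts : list R) : R :=
  match ts with
  | nil => 0
  | t1 :: ts' => mdist (g t0) (g t1) + poly_length g t1 ts'
  end.

Fixpoint increasing_from (t0 : R) (ts : list R) : Prop :=
  match ts with
  | nil => True
  | t1 :: ts' => t0 <= t1 /\ increasing_from t1 ts'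
  end.

Definition partition_of (a b : R) (ts : list R) : Prop :=
  increasing_from a ts /\ last ts a = b.

Definition curve_length_is {Y : MetricSpace} (a b : R) (g : R -> Y) (L : R) : Prop :=
  is_lub (fun s => exists ts, partition_of a b ts /\ s = poly_length g a ts) L.

Definition geodesic (Y : MetricSpace) : Prop :=
  forall p q : Y, exists (a b : R) (g : R -> Y),
    a <= b /\ continuous_on_interval a b g /\ g a = p /\ g b = q /\
    curve_length_is a b g (mdist p q).

Definition LQ {X Y : MetricSpace} (L : R) (F : X -> Y) : Prop :=
  1 <= L /\
  forall (x : X) (r : R), 0 < r ->
    (forall y : Y, ball (F x) (r / L) y -> exists x', ball x r x' /\ F x' = y) /\
    (forall x', ball x r x' -> ball (F x) (L * r) (F x')).

(* Main.v *)
Require Import Defs.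
From Stdlib Require Import Reals Lra.
Open Scope R_scope.

Lemma LQ_upper (X Y : MetricSpace) (L : R) (F : X -> Y) :
  LQ L F -> forall p q, mdist (F p) (F q) <= L * mdist p q.
Proof.
  intros [HL H] p q.
  destruct (Rle_or_lt (mdist (F p) (F q)) (L * mdist p q)) as [h|h]; auto.
  exfalso.
  set (e := (mdist (F p) (F q) - L * mdist p q) / (2 * L)).
  assert (He : 0 < e) by (unfold e; apply Rdiv_lt_0_compat; lra).
  assert (Hs : 0 < mdist p q + e) by (pose proof (mdist_nonneg _ p q); lra).
  destruct (H p _ Hs) as [_ H2].
  assert (Hb : ball p (mdist p q + e) q) by (unfold ball; lra).
  specialize (H2 q Hb). unfold ball in H2.
  assert (L * e * 2 = mdist (F p) (F q) - L * mdist p q).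
  { unfold e. field. lra. }
  nra.
Qed.

Theorem lemma3p6 (X Y : MetricSpace) (L : R) (F : X -> Y) (x : X) (r : R) :
  proper X -> geodesic Y -> LQ L F -> 0 < r ->
  (forall p q, ball x r p -> ball x r q -> F p = F q -> p = q) ->
  forall p q, ball x (r / (1 + 2 * L ^ 2)) p -> ball x (r / (1 + 2 * L ^ 2)) q ->
    / L * mdist p q <= mdist (F p) (F q) /\ mdist (F p) (F q) <= L * mdist p q.
Proof.
  intros _ _ HLQ Hr Hinj p q Hp Hq.
  pose proof (LQ_upper _ _ _ _ HLQ) as Up.
  destruct HLQ as [HL H].
  split; [| apply Up].
  unfold ball in Hp, Hq.
  set (r' := r / (1 + 2 * L ^ 2)) in *.
  assert (Hr' : r' + 2 * L ^ 2 * r' = r) by (unfold r'; field; nra).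
  assert (Hpq : mdist p q < 2 * r').
  { pose proof (mdist_tri _ p x q). rewrite (mdist_sym _ p x) in H0. lra. }
  pose proof (Up p q) as U1.
  set (d := mdist (F p) (F q)) in *.
  assert (HLd : L * d < 2 * L ^ 2 * r').
  { assert (L * d <= L * (L * mdist p q)) by (apply Rmult_le_compat_l; lra).
    assert (L * (L * mdist p q) < L * (L * (2 * r'))).
    { apply Rmult_lt_compat_l; [lra|]. apply Rmult_lt_compat_l; lra. }
    simpl. lra. }
  destruct (Rle_or_lt (mdist p q) (L * d)) as [h|h].
  - apply (Rmult_le_reg_l L); [lra|]. rewrite <- Rmult_assoc, Rinv_r by lra. lra.
  - exfalso.
    set (dl := Rmin (r - r' - L * d) (mdist p q - L * d)).
    assert (Hdl : 0 < dl) by (unfold dl; apply Rmin_case; lra).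
    assert (Hdl1 : dl <= r - r' - L * d) by apply Rmin_l.
    assert (Hdl2 : dl <= mdist p q - L * d) by apply Rmin_r.
    assert (Hd0 : 0 <= d) by apply mdist_nonneg.
    assert (Hs : 0 < L * d + dl) by nra.
    destruct (H p _ Hs) as [H1 _].
    assert (Hb : ball (F p) ((L * d + dl) / L) (F q)).
    { unfold ball. fold d. apply (Rmult_lt_reg_l L); [lra|].
      replace (L * ((L * d + dl) / L)) with (L * d + dl) by (field; lra). nra. }
    destruct (H1 _ Hb) as [x1 [Hx1 HF]]. unfold ball in Hx1.
    assert (Hx1b : ball x r x1).
    { unfold ball. pose proof (mdist_tri _ x p x1). lra. }
    assert (Hqb : ball x r q) by (unfold ball; nra).
    assert (x1 = q) by (apply Hinj; auto).
    subst x1. lra.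
Qed.
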